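(* Let $q$ be a prime power and $n=2^v$ with $v\ge0$ and $\gcd(q,n)=1$. The following are equivalent: (i) Type-I duadic splittings of $\mathbb{Z}_{2^v}$ exist; (ii) Type-I duadic splittings of $\mathbb{Z}_{2^v}$ given by some $q$-translation exist; (iii) $0<v<2\,\nu_2(q-1)$. If these hold, there is an integer $u$ with $\max\{0,v-\nu_2(q-1)\}\le u<\min\{v,\nu_2(q-1)\}$, and for such $u$, $\tau_{2^u}$ is a $q$-translation of $\mathbb{Z}_{2^v}$ (i.e. $q2^u\equiv2^u\pmod{2^v}$) and Type-I duadic splittings of $\mathbb{Z}_{2^v}$ given by $\tau_{2^u}$ exist.
   Context: $\mathbb{Z}_n=\mathbb{Z}/n\mathbb{Z}$, $\mathbb{Z}_n^*$ its units. $\mu_q:i\mapsto qi\bmod n$; a subset $P\subseteq\mathbb{Z}_n$ is $\mu_q$-invariant if $\mu_q(P)=P$. For $s\in\mathbb{Z}_n^*$, $t\in\mathbb{Z}_n$ with $qt\equiv t\pmod n$: $\rho_{s,t}:i\mapsto s(i+t)\bmod n$, and $\tau_t=\rho_{1,t}$ is a $q$-translation. Type-I duadic splittings of $\mathbb{Z}_n$ given by $\rho_{s,t}$ exist if there is a $\mu_q$-invariant $P$ with $\mathbb{Z}_n=P\cup\rho_{s,t}(P)$ a disjoint union; Type-I duadic splittings of $\mathbb{Z}_n$ exist if this holds for some such $s,t$. $\nu_2$ is the $2$-adic valuation, $\nu_2(0)=\infty$. *)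

(* Defs.v *)
(* Z_n is modelled by 'I_n (n >= 1; here n = 2^v >= 1, so
   the case v = 0, i.e. Z_1, is handled correctly, unlike 'Z_n). Maps of Z_n
   are given by nat-valued formulas reduced modulo n. *)
From mathcomp Require Import all_boot.
Set Implicit Arguments. Unset Strict Implicit. Unset Printing Implicit Defensive.

Definition imZ {n : nat} (f : nat -> nat) (P : {set 'I_n}) : {set 'I_n} :=
  [set j : 'I_n | [exists i in P, f (val i) %% n == val j]].

Definition mu (q : nat) : nat -> nat := fun i => q * i.
Definition rho (s t : nat) : nat -> nat := fun i => s * (i + t).

Definition mu_invariant {n : nat} (q : nat) (P : {set 'I_n}) : Prop :=
  imZ (mu q) P = P.

Definition splits_by (n q s t : nat) : Prop :=
  exists P : {set 'I_n}, mu_invariant q P /\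
    P :|: imZ (rho s t) P = [set: 'I_n] /\ P :&: imZ (rho s t) P = set0.

Definition admissible (n q s t : nat) : Prop :=
  s < n /\ coprime s n /\ t < n /\ q * t = t %[mod n].

Definition typeI_exists (n q : nat) : Prop :=
  exists s t, admissible n q s t /\ splits_by n q s t.

(* q-translation: tau_t = rho_{1,t} with q t = t (mod n) *)
Definition q_translation (n q t : nat) : Prop := t < n /\ q * t = t %[mod n].

Definition typeI_exists_translation (n q : nat) : Prop :=
  exists t, q_translation n q t /\ splits_by n q 1 t.

Definition prime_power (q : nat) : Prop :=
  exists p k, prime p /\ 0 < k /\ q = p ^ k.

Definition nu2 (m : nat) : nat := logn 2 m.

(* Main.v *)
Require Import Defs.
From mathcomp Require Import all_boot all_algebra ring zify.
Set Implicit Arguments. Unset Strict Implicit.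

Lemma bit_mod y u v : u < v -> odd ((y %% 2 ^ v) %/ 2 ^ u) = odd (y %/ 2 ^ u).
Proof.
move=> uv.
rewrite {2}(divn_eq y (2 ^ v)); set w := y %% 2 ^ v.
rewrite -(subnK (ltnW uv)) expnD mulnA divnMDl ?expn_gt0 //.
rewrite oddD oddM oddX /=.
by rewrite subn_eq0 leqNgt uv /= andbF.
Qed.

Lemma bit_q q x u a : u < a -> 2 ^ a %| q - 1 -> 0 < q ->
  odd ((q * x) %/ 2 ^ u) = odd (x %/ 2 ^ u).
Proof.
move=> ua /dvdnP [c Hc] q0.
have -> : q * x = c * 2 ^ (a - u) * x * 2 ^ u + x.
  rewrite -(subnK q0) mulnDl mul1n Hc -{1}(subnK (ltnW ua)) expnD.
  by rewrite -!mulnA [x * _]mulnC !mulnA.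
rewrite divnMDl ?expn_gt0 // oddD !oddM oddX.
by case: (a - u) (subn_gt0 u a) => [|k]; rewrite ?ua //= andbF.
Qed.

Lemma bit_add x u : odd ((x + 2 ^ u) %/ 2 ^ u) = ~~ odd (x %/ 2 ^ u).
Proof.
by rewrite addnC -{1}(mul1n (2 ^ u)) divnMDl ?expn_gt0 // oddD.
Qed.

Lemma inv_mod k n : 0 < k -> coprime k n -> exists w, k * w = 1 %[mod n].
Proof.
move=> k0 co; case: (egcdnP n k0) => km kn E _.
exists km; rewrite mulnC E (eqnP co).
exact: modnMDl.
Qed.

Definition zn n (Hn : 0 < n) (y : nat) : 'I_n := Ordinal (ltn_pmod y Hn).

Lemma suff (q v u : nat) : 0 < q -> 2 ^ nu2 (q - 1) %| q - 1 ->
  v - nu2 (q - 1) <= u -> u < minn v (nu2 (q - 1)) ->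
        q * 2 ^ u = 2 ^ u %[mod 2 ^ v] /\
        q_translation (2 ^ v) q (2 ^ u) /\
        splits_by (2 ^ v) q 1 (2 ^ u).
Proof.
set a := nu2 (q - 1) => q0 Ha vu; rewrite leq_min => /andP [uv ua].
have n0 : 0 < 2 ^ v by rewrite expn_gt0.
have Hq : q * 2 ^ u = 2 ^ u %[mod 2 ^ v].
  apply/eqP; rewrite eqn_mod_dvd ?leq_pmull // -{2}(mul1n (2 ^ u)) -mulnBl.
  case/dvdnP: Ha => c ->.
  rewrite -mulnA -expnD; apply: dvdn_mull; rewrite dvdn_Pexp2l //.
  by rewrite -leq_subLR.
split=> //; split; first by split=> //; rewrite ltn_exp2l.
exists [set x : 'I_(2 ^ v) | ~~ odd (x %/ 2 ^ u)].
split; [|split].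
- apply/setP => j; rewrite !inE; apply/existsP/idP.
    case=> i /andP [Pi /eqP <-]; rewrite inE in Pi.
    by rewrite bit_mod // /mu (bit_q _ ua).
  move=> Pj.
  have a0 : 0 < a by apply: leq_ltn_trans ua.
  have oq : odd q.
    have := dvdn_trans (dvdn_exp2l 2 a0) Ha; rewrite expn1 dvdn2.
    by move=> H; rewrite -(subnK q0) oddD /= addbT.
  have [w Hw] := inv_mod q0 (coprimeXr v (etrans (coprimen2 q) oq)).
  have Ej : (q * ((w * j) %% 2 ^ v)) %% 2 ^ v = j.
    by rewrite modnMmr mulnA -modnMml Hw modnMml mul1n modn_small.
  exists (zn n0 (w * j)); rewrite /= /mu Ej eqxx andbT inE /=.
  by rewrite -[odd _](bit_q _ ua Ha q0) -(bit_mod _ uv) Ej.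
- apply/setP => j; rewrite !inE; case Pj: (~~ _) => //=.
  move/negbFE: Pj => Pj.
  have ju : 2 ^ u <= j.
    by rewrite leqNgt; apply/negP => H; rewrite divn_small in Pj.
  apply/existsP; exists (zn n0 (j - 2 ^ u)).
  have jn : j - 2 ^ u < 2 ^ v by apply: leq_ltn_trans (leq_subr _ _) _.
  rewrite !inE /= /rho modn_small // mul1n subnK // modn_small // eqxx andbT.
  by rewrite -[odd _]negbK -bit_add subnK // Pj.
- apply/setP => j; rewrite !inE; apply/negbTE/negP.
  case/andP => Pj /existsP [i /andP [Pi /eqP Hj]].
  rewrite inE in Pi.
  by rewrite -Hj /rho mul1n bit_mod // bit_add Pi in Pj.
Qed.




Lemma cancel_mod s n a b : coprime s n -> s * a = s * b %[mod n] -> a = b %[mod n].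
Proof.
move=> co E.
case: (posnP s) => [s0|s0].
  by move: co; rewrite s0 /coprime gcd0n => /eqP ->; rewrite !modn1.
have [w Hw] := inv_mod s0 co.
have H : w * s * a = w * s * b %[mod n] by rewrite -!mulnA -modnMmr E modnMmr.
have K c : c = w * s * c %[mod n] by rewrite -modnMml (mulnC w) Hw modnMml mul1n.
by rewrite K H -K.
Qed.

Lemma noFix n q s t x k (P : {set 'I_n}) : 0 < n -> coprime s n ->
  q * t = t %[mod n] -> mu_invariant q P ->
  P :|: imZ (rho s t) P = setT -> P :&: imZ (rho s t) P = set0 ->
  s * (x + t) = q ^ k * x %[mod n] -> False.
Proof.
move=> n0 co Ht Hinv Hun Hdis E.
have inv1 y : zn n0 y \in P -> zn n0 (q * y) \in P.
  move=> Py; rewrite -Hinv inE; apply/existsP; exists (zn n0 y).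
  by rewrite Py /= /mu modnMmr.
have invk y : zn n0 y \in P -> zn n0 (q ^ k * y) \in P.
  elim: k {E} => [|k IH] Py; first by rewrite mul1n.
  suff -> : zn n0 (q ^ k.+1 * y) = zn n0 (q * (q ^ k * y)) by apply: inv1; apply: IH.
  by apply: val_inj => /=; rewrite expnS mulnA.
have Htk : q ^ k * t = t %[mod n].
  elim: k {E invk} => [|k IH]; first by rewrite mul1n.
  by rewrite expnS -mulnA -modnMmr IH modnMmr.
have inIm i : i \in P -> zn n0 (s * (i + t)) \in imZ (rho s t) P.
  by move=> Pi; rewrite inE; apply/existsP; exists i; rewrite Pi /= /rho.
case Px: (zn n0 x \in P).
  have H1 := invk _ Px.
  have H2 : zn n0 (q ^ k * x) = zn n0 (s * (x + t)) by apply: val_inj => /=.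
  have H3 := inIm _ Px.
  have : zn n0 (s * (x + t)) \in P :&: imZ (rho s t) P.
    rewrite inE -H2 H1 /=.
    suff -> : zn n0 (q ^ k * x) = zn n0 (s * (zn n0 x + t)) by apply: inIm.
    by apply: val_inj => /=; rewrite -E -[in RHS]modnMmr modnDml modnMmr.
  by rewrite Hdis inE.
have : zn n0 x \in P :|: imZ (rho s t) P by rewrite Hun inE.
rewrite inE Px /= inE => /existsP [i /andP [Pi /eqP Hi]].
have Pzi : zn n0 i \in P by suff -> : zn n0 i = i by []; apply: val_inj; exact: modn_small.
have Pqi := invk _ Pzi.
suff : zn n0 (q ^ k * i) = zn n0 x by move=> H; rewrite H Px in Pqi.
apply: val_inj => /=.
have : q ^ k * i + t = x + t %[mod n].
  apply: (cancel_mod co).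
  rewrite -[in LHS]modnMmr -[in LHS]modnDmr -Htk modnDmr modnMmr.
  rewrite -mulnDr mulnCA -[in LHS]modnMmr.
  rewrite /rho /= in Hi; rewrite Hi modnMmr E //.
by move/eqP; rewrite eqn_modDr => /eqP.
Qed.
Import GRing.Theory Num.Theory.

Import GRing.Theory Num.Theory.
Local Open Scope ring_scope.

Lemma fromZ (n s c t x : nat) :
  (n%:Z %| ((s%:Z - c%:Z) * x%:Z + s%:Z * t%:Z)%R)%Z -> (s * (x + t) = c * x %[mod n])%N.
Proof.
move=> H.
have : ((s * (x + t))%N%:Z %% n = (c * x)%N%:Z %% n)%Z.
  apply/eqP; rewrite eqz_mod_dvd; suff -> : ((s * (x + t))%N%:Z - (c * x)%N%:Z
     = (s%:Z - c%:Z) * x%:Z + s%:Z * t%:Z) by [].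
  by rewrite !PoszM PoszD; ring.
by rewrite !modz_nat => -[].
Qed.

Lemma liftx (n : nat) (xi al be : int) : (0 < n)%N ->
  (n%:Z %| (al * xi + be)%R)%Z -> exists x : nat, (n%:Z %| (al * x%:Z + be)%R)%Z.
Proof.
move=> n0 H; exists `|(xi %% n%:Z)%Z|%N.
have n0' : n%:Z != 0%R by rewrite eqz_nat -lt0n.
rewrite gez0_abs ?modz_ge0 //.
have -> : (al * (xi %% n%:Z)%Z + be = (al * xi + be) - (al * (xi %/ n%:Z)%Z) * n%:Z)%R.
  by rewrite {2}(divz_eq xi n%:Z); ring.
by rewrite rpredB // dvdz_mull // dvdzz.
Qed.

Lemma ident (N e K F c g u : int) : (g * u - 1 = c * N)%R ->
  (e - K * N = F * (c * N - (g * u - 1)))%R -> e = (K * N)%R.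
Proof. by move=> Hc He; apply/eqP; rewrite -subr_eq0 He Hc subrr mulr0. Qed.


Lemma toZ (a b n : nat) : (a = b %[mod n])%N -> (n%:Z %| a%:Z - b%:Z)%Z.
Proof.
move=> H; rewrite -eqz_mod_dvd; apply/eqP.
by rewrite !modz_nat H.
Qed.



Lemma find_x (q s t v : nat) : (0 < v)%N -> odd q -> (1 < q)%N -> odd s ->
  (q * t = t %[mod 2 ^ v])%N -> (2 * nu2 (q - 1) <= v)%N ->
  exists x k, (s * (x + t) = q ^ k * x %[mod 2 ^ v])%N.
Proof.
move=> v0 oq q1 os Ht; rewrite /nu2; set a := logn 2 (q - 1) => Hv.
have p2 : prime 2 by [].
set N := (2 ^ v)%N in Ht *.
have N0 : (0 < N)%N by rewrite expn_gt0.
have q10 : (0 < q - 1)%N by rewrite subn_gt0.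
have [m cm Hm] := pfactor_coprime p2 q10; rewrite -/a in Hm.
have om : odd m by rewrite -coprime2n.
have oq1 : odd (q - 1) = false.
  by move: oq; rewrite -{1}(subnK (ltnW q1)) oddD /= addbT => /negbTE.
have a1 : (1 <= a)%N.
  by rewrite -(pfactor_dvdn 1 p2 q10) expn1 dvdn2 oq1.
set r := (v - a)%N.
have ar : (a <= r)%N by rewrite /r; lia.
have Hrt : (2 ^ r %| t)%N.
  have : (N %| q * t - t)%N by rewrite -eqn_mod_dvd ?leq_pmull ?(ltnW q1) //; apply/eqP.
  rewrite -{2}(mul1n t) -mulnBl Hm /N -(@subnK a v); last by lia.
  rewrite expnD mulnAC dvdn_pmul2r ?expn_gt0 // Gauss_dvdr //.
  exact: coprimeXl.
case Hnt: (N %| t)%N.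
  exists 0%N, 0%N; rewrite add0n muln0 mod0n -modnMmr.
  by move: Hnt; rewrite /dvdn => /eqP ->; rewrite muln0 mod0n.
have t0 : (0 < t)%N by rewrite lt0n; apply/eqP => t0; rewrite t0 dvdn0 in Hnt.
have [t' ct' Ht'] := pfactor_coprime p2 t0; set d := logn 2 t in Ht'.
have dv : (d < v)%N.
  rewrite ltnNge; apply/negP => vd.
  by rewrite Ht' dvdn_mull // dvdn_exp2l in Hnt.
have rd : (r <= d)%N by rewrite -(pfactor_dvdn r p2 t0).
have Eq : q = (1 + m * 2 ^ a)%N by rewrite -Hm subnKC // ltnW.
case Hs: (2 ^ d.+1 %| s - 1)%N.
  case/dvdnP: Hs => h' Hh'.
  have s1 : (1 <= s)%N by case: s os {Hh'}.
  have Es : s = (1 + h' * 2 ^ (d - a) * 2 ^ a * 2)%N.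
    rewrite -!mulnA -expnSr -expnD addnS subnK; last by lia.
    by rewrite -Hh' subnKC.
  have Et : t = (t' * 2 ^ (d - a) * 2 ^ a)%N.
    by rewrite Ht' -mulnA -expnD subnK //; lia.
  set N1 := (N - 1)%N.
  have EN : N = (N1 + 1)%N by rewrite /N1 subnK.
  set g := (m + N1 * 2 * (h' * 2 ^ (d - a)))%N.
  have og : odd g by rewrite /g oddD om !oddM andbF.
  have g0 : (0 < g)%N by case: g og.
  have [u Hu] := inv_mod g0 (coprimeXr v (etrans (coprimen2 g) og)).
  have /dvdzP [c Hc] := toZ Hu.
  have Hdiv : (N%:Z %| (s%:Z - q%:Z) * (u%:Z * s%:Z * (t' * 2 ^ (d - a))%N%:Z)
       + s%:Z * t%:Z)%Z.
    rewrite PoszM -/N in Hc.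
    rewrite Et Eq Es /g !(PoszD, PoszM) in Hc *.
    rewrite EN PoszD in Hc *.
    set A := Posz (2 ^ a) in Hc *; set D := Posz (2 ^ (d - a)) in Hc *.
    set S := (1 + h'%:Z * D * A * 2)%R.
    apply/dvdzP; exists (A * S * (t'%:Z * D) * (2 * (h'%:Z * D) * u%:Z - c))%R.
    apply: (ident (F := (A * S * (t'%:Z * D))%R) Hc).
    rewrite /S; ring.
  have [x Hx] := liftx N0 Hdiv.
  by exists x, 1%N; rewrite expn1; exact: fromZ.
have s10 : (0 < s - 1)%N.
  by rewrite lt0n; apply/eqP => H; rewrite H dvdn0 in Hs.
have [s' cs' Hs'] := pfactor_coprime p2 s10; set e := logn 2 (s - 1) in Hs'.
have ed : (e <= d)%N.
  rewrite leqNgt; apply/negP => de.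
  by rewrite Hs' dvdn_mull // dvdn_exp2l in Hs.
have os' : odd s' by rewrite -coprime2n.
have s0' : (0 < s')%N by rewrite lt0n; apply/eqP => s0; rewrite s0 in os'.
have [u Hu] := inv_mod s0' (coprimeXr v (etrans (coprimen2 s') os')).
have /dvdzP [c Hc] := toZ Hu.
have s1 : (1 <= s)%N by rewrite lt0n; apply/eqP => s0; rewrite s0 in os.
have Es : s = (1 + s' * 2 ^ e)%N by rewrite -Hs' subnKC.
have Et : t = (t' * 2 ^ (d - e) * 2 ^ e)%N.
  by rewrite Ht' -mulnA -expnD subnK.
have Hdiv : (N%:Z %| (s%:Z - 1%N%:Z) * (- (u%:Z * s%:Z * t'%:Z * (2 ^ (d - e))%N%:Z))
       + s%:Z * t%:Z)%Z.
  rewrite PoszM -/N in Hc.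
  rewrite Et Es !(PoszD, PoszM).
  set E := Posz (2 ^ e) in Hc *; set D := Posz (2 ^ (d - e)) in Hc *.
  set S := (1 + s'%:Z * E)%R.
  apply/dvdzP; exists (- (S * t'%:Z * D * E * c))%R.
  apply: (ident (F := (S * t'%:Z * D * E)%R) Hc).
  rewrite /S; ring.
have [x Hx] := liftx N0 Hdiv.
by exists x, 0%N; rewrite expn0; exact: fromZ.
Qed.

Local Close Scope ring_scope.

Lemma nec (q v s t : nat) : prime_power q -> coprime q (2 ^ v) -> coprime s (2 ^ v) ->
  q * t = t %[mod 2 ^ v] -> splits_by (2 ^ v) q s t ->
  0 < v /\ v < 2 * nu2 (q - 1).
Proof.
move=> [p [k [pp [k0 Eqp]]]] cq cs Ht.
move=> [P [Hinv [Hun Hdis]]].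
have n0 : 0 < 2 ^ v by rewrite expn_gt0.
case: (posnP v) => [v0|v0].
  exfalso; apply: (noFix (x := 0) (k := 0) n0 cs Ht Hinv Hun Hdis).
  by rewrite v0 !modn1.
split=> //; rewrite ltnNge; apply/negP => Hv.
have oq : odd q by rewrite -coprimen2 -(coprime_pexpr _ _ v0).
have os : odd s by rewrite -coprimen2 -(coprime_pexpr _ _ v0).
have q1 : 1 < q.
  rewrite Eqp; apply: leq_trans (prime_gt1 pp) _.
  by rewrite -{1}(expn1 p) leq_pexp2l // prime_gt0.
have [x [k' Hx]] := find_x v0 oq q1 os Ht Hv.
exact: (noFix n0 cs Ht Hinv Hun Hdis Hx).
Qed.

Theorem theorem3p8 (q v : nat) :
  prime_power q -> coprime q (2 ^ v) ->
  (typeI_exists (2 ^ v) q <-> typeI_exists_translation (2 ^ v) q) /\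
  (typeI_exists_translation (2 ^ v) q <-> (0 < v /\ v < 2 * nu2 (q - 1))) /\
  (typeI_exists (2 ^ v) q ->
     (exists u, v - nu2 (q - 1) <= u /\ u < minn v (nu2 (q - 1))) /\
     (forall u, v - nu2 (q - 1) <= u -> u < minn v (nu2 (q - 1)) ->
        q * 2 ^ u = 2 ^ u %[mod 2 ^ v] /\
        q_translation (2 ^ v) q (2 ^ u) /\
        splits_by (2 ^ v) q 1 (2 ^ u))).
Proof.
move=> pq cq.
have q0 : 0 < q.
  case: pq => p [k [pp [_ ->]]]; by rewrite expn_gt0 prime_gt0.
have Ha : 2 ^ nu2 (q - 1) %| q - 1 by apply: pfactor_dvdnn.
have Hsuff := suff q0 Ha.
have H1 : typeI_exists (2 ^ v) q -> 0 < v /\ v < 2 * nu2 (q - 1).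
  by case=> s [t [[_ [cs [_ Ht]]] Hs]]; apply: (nec pq cq cs Ht Hs).
have H4 : typeI_exists_translation (2 ^ v) q -> 0 < v /\ v < 2 * nu2 (q - 1).
  by case=> t [[_ Ht] Hs]; apply: (nec pq cq (coprime1n _) Ht Hs).
have Hex : 0 < v /\ v < 2 * nu2 (q - 1) ->
    exists u, v - nu2 (q - 1) <= u /\ u < minn v (nu2 (q - 1)).
  by move=> [v0 va]; exists (v - nu2 (q - 1)); split=> //; lia.
have H3 : 0 < v /\ v < 2 * nu2 (q - 1) -> typeI_exists_translation (2 ^ v) q.
  move=> H; have [u [u1 u2]] := Hex H.
  have [_ [Ht Hs]] := Hsuff v u u1 u2.
  by exists (2 ^ u); split.
have H2 : typeI_exists_translation (2 ^ v) q -> typeI_exists (2 ^ v) q.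
  move=> H; have [v0 _] := H4 H; case: H => t [[tn Ht] Hs].
  exists 1, t; split; last by [].
  split; first by rewrite -{1}(expn0 2) ltn_exp2l.
  by split; [exact: coprime1n | split].
split; first by split=> H; [apply: H3; apply: H1 | apply: H2].
split; first by split; [apply: H4 | apply: H3].
move=> H; split; first exact: Hex (H1 H).
exact: Hsuff.
Qed.
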